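(* Let $E$ and $F$ be finite cyclic groups. Then $g(OD(E\oplus F))=3$ if and only if at least one of the following holds: (a) $|E|$ is composite; (b) $|F|$ is composite; (c) $|E|$ and $|F|$ are distinct primes.
   Context: $E\oplus F$ denotes the external direct product of $E$ and $F$. For a finite group $G$, $o(x)$ denotes the order of $x\in G$. The order-divisor graph $OD(G)$ is the simple undirected graph with vertex set $G$, in which two distinct vertices $x,y$ are adjacent if and only if $o(x)\neq o(y)$ and either $o(x)\mid o(y)$ or $o(y)\mid o(x)$. The girth $g(\Gamma)$ of a graph $\Gamma$ is the length of a shortest cycle in $\Gamma$ (taken to be $0$ if $\Gamma$ has no cycle). *)

(* Defs.v *)
From mathcomp Require Import all_boot all_fingroup all_solvable.
Set Implicit Arguments. Unset Strict Implicit. Unset Printing Implicit Defensive.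

(* Simple graphs are given by a vertex set V : {set T} (T a finType) and a
   symmetric irreflexive adjacency relation e : rel T (restricted to V). *)

Definition has_cycle_of_length (T : finType) (V : {set T}) (e : rel T)
    (k : nat) : bool :=
  [exists t : k.-tuple T,
     [&& 3 <= k, all (fun x => x \in V) t, uniq t & path.cycle e t]].

(* Girth: the least length of a cycle, or 0 if there is no cycle.
   (A cycle has pairwise distinct vertices, so its length is <= #|T|.) *)
Definition girth (T : finType) (V : {set T}) (e : rel T) : nat :=
  head 0 [seq k <- iota 0 #|T|.+1 | has_cycle_of_length V e k].

Definition od_adj (gT : finGroupType) : rel gT :=
  fun x y => [&& x != y, #[x]%g != #[y]%g & (#[x]%g %| #[y]%g) || (#[y]%g %| #[x]%g)].

Definition OD_girth (gT : finGroupType) (G : {group gT}) : nat :=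
  girth G (@od_adj gT).

Definition composite (n : nat) : bool := (1 < n) && ~~ prime n.

(* Main.v *)
Require Import Defs.
From mathcomp Require Import all_boot all_fingroup all_solvable.
From mathcomp Require Import zify.

Section Aux.
Variables gT1 gT2 : finGroupType.

Lemma expg_pair (a : gT1) (b : gT2) k : ((a, b) ^+ k)%g = (a ^+ k, b ^+ k)%g.
Proof. elim: k => [|k IH]; first by []. by rewrite !expgS IH. Qed.

Lemma order_pair (a : gT1) (b : gT2) : #[(a, b)]%g = lcmn #[a]%g #[b]%g.
Proof.
apply/eqP; rewrite eqn_dvd; apply/andP; split.
  rewrite order_dvdn expg_pair; apply/eqP; congr pair; apply/eqP;
    by rewrite -order_dvdn ?dvdn_lcml ?dvdn_lcmr.
rewrite dvdn_lcm !order_dvdn.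
have := expg_order (a, b); rewrite expg_pair => -[-> ->].
by rewrite !eqxx.
Qed.
End Aux.

Lemma girth3P (T : finType) (V : {set T}) (e : rel T) :
  girth V e = 3 <-> has_cycle_of_length V e 3.
Proof.
split.
  rewrite /girth; case E: [seq k <- _ | _] => [|k s] //= Hk.
  have: k \in [seq k <- iota 0 #|T|.+1 | has_cycle_of_length V e k].
    by rewrite E mem_head.
  by rewrite mem_filter Hk => /andP[].
move=> H.
have HT: 3 <= #|T|.
  move/existsP: H => [t /and4P[_ _ Hu _]].
  by have := max_card (mem (tval t)); rewrite (card_uniqP Hu) size_tuple.
rewrite /girth -(subnK HT) addnC -addSn iotaD filter_cat.
have -> : [seq k <- iota 0 4 | has_cycle_of_length V e k] = [:: 3].
  rewrite /= H.
  have F k : k < 3 -> has_cycle_of_length V e k = false.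
    move=> Hk; apply/existsP => -[t /andP[Hk' _]].
    by rewrite leqNgt Hk in Hk'.
  by rewrite !F.
by [].
Qed.

Lemma cycle3 (T : finType) (e : rel T) (x y z : T) :
  path.cycle e [:: x; y; z] = [&& e x y, e y z & e z x].
Proof. by rewrite /= andbT. Qed.

Lemma mk_tri (gT : finGroupType) (V : {set gT}) (x y z : gT) :
  x \in V -> y \in V -> z \in V ->
  (#[x] %| #[y])%g -> (#[y] %| #[z])%g ->
  (#[x] != #[y])%g -> (#[y] != #[z])%g -> (#[x] != #[z])%g ->
  has_cycle_of_length V (@od_adj gT) 3.
Proof.
move=> xV yV zV dxy dyz nxy nyz nxz.
apply/existsP; exists [tuple x; y; z].
have ne a b : (#[a] != #[b])%g -> a != b.
  by apply: contraNneq => ->.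
rewrite /= xV yV zV !inE negb_or !ne //= /od_adj.
idtac.
rewrite nxy nyz (eq_sym #[z]%g) nxz dxy dyz (dvdn_trans dxy dyz) !orbT /=.
by rewrite !ne // eq_sym.
Qed.

Lemma get_tri (gT : finGroupType) (V : {set gT}) :
  has_cycle_of_length V (@od_adj gT) 3 ->
  exists x y z, [/\ x \in V, y \in V, z \in V &
     [/\ (#[x] != #[y])%g, (#[y] != #[z])%g & (#[x] != #[z])%g]].
Proof.
move/existsP => [[[|x [|y [|z [|w s]]]] //= Hs]].
rewrite /= !andbT => /and5P[/and3P[xV yV zV] _].
rewrite /od_adj => /and3P[_ nxy _] /and3P[_ nyz _] /and3P[_ nzx _].
by exists x, y, z; split=> //; split=> //; rewrite eq_sym.
Qed.

Lemma chain_comp (gT : finGroupType) (H : {group gT}) :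
  cyclic H -> composite #|H| ->
  exists a b c, [/\ a \in H, b \in H, c \in H &
   [/\ (#[a] %| #[b])%g, (#[b] %| #[c])%g,
       (#[a] != #[b])%g, (#[b] != #[c])%g & (#[a] != #[c])%g]].
Proof.
move/cyclicP=> [g Hg]; rewrite Hg -orderE /composite => /andP[m1 npm].
set m := #[g]%g in m1 npm *.
have pp := pdiv_prime m1; set p := pdiv m in pp.
have pm : p %| m := pdiv_dvd m.
set q := m %/ p.
have mqp : q * p = m := divnK pm.
have p1 := prime_gt1 pp.
have q1 : 1 < q.
  case: (ltnP 1 q) => // hq.
  have : q = 0 \/ q = 1 by lia.
  case=> hq0; move: mqp; rewrite hq0 ?mul1n => hm.
    by move: m1; rewrite -hm.
  by move: npm; rewrite -hm pp.
have oq : #[g ^+ p]%g = q by rewrite orderXdiv.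
exists 1%g, (g ^+ p)%g, g; split.
- exact: group1.
- by rewrite groupX // cycle_id.
- exact: cycle_id.
rewrite order1 oq -/m dvd1n -mqp dvdn_mulr //.
by split=> //; apply/eqP; nia.
Qed.

Lemma not_comp n : 0 < n -> composite n = false -> n = 1 \/ prime n.
Proof.
case: n => [|[|n]] //= _; first by left.
by rewrite /composite /= => /negbFE; right.
Qed.

Theorem mainTheorem10 (gT1 gT2 : finGroupType)
    (E : {group gT1}) (F : {group gT2})
    (cycE : cyclic E) (cycF : cyclic F) :
  OD_girth (setX_group E F) = 3 <->
  [\/ composite #|E|, composite #|F|
    | [/\ prime #|E|, prime #|F| & #|E| != #|F|] ].
Proof.
rewrite /OD_girth girth3P; split.
  move/get_tri => [x [y [z [xV yV zV [nxy nyz nxz]]]]].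
  set N := lcmn #|E| #|F|.
  have dN u : u \in setX E F -> (#[u] %| N)%g.
    case: u => a b; rewrite in_setX => /andP[aE bF].
    rewrite order_pair dvdn_lcm.
    by rewrite (dvdn_trans (order_dvdG aE) (dvdn_lcml _ _))
               (dvdn_trans (order_dvdG bF) (dvdn_lcmr _ _)).
  case cE: (composite #|E|); first by constructor 1.
  case cF: (composite #|F|); first by constructor 2.
  case pp: [&& prime #|E|, prime #|F| & #|E| != #|F|].
    by case/and3P: pp => *; constructor 3.
  exfalso.
  have hN : N = 1 \/ prime N.
    have [E1|pE] := not_comp _ (cardG_gt0 E) cE;
    have [F1|pF] := not_comp _ (cardG_gt0 F) cF.
    - by left; rewrite /N E1 F1.
    - by right; rewrite /N E1 lcm1n.
    - by right; rewrite /N F1 lcmn1.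
    - right; move: pp; rewrite pE pF /= => /negbFE/eqP eEF.
      by rewrite /N eEF (lcmn_idPl (dvdnn _)).
  have key u : u \in setX E F -> #[u]%g = 1 \/ #[u]%g = N.
    move/dN; case: hN => [->|pN]; first by rewrite dvdn1 => /eqP; left.
    by case/primeP: pN => _ H /H /orP[] /eqP; [left|right].
  move: nxy nyz nxz.
  by case: (key _ xV) => ->; case: (key _ yV) => ->; case: (key _ zV) => ->;
    rewrite ?eqxx.
case.
- case/(chain_comp _ _ cycE) => [a [b [c [aE bE cE [dab dbc nab nbc nac]]]]].
  apply: (@mk_tri _ _ (a, 1%g) (b, 1%g) (c, 1%g));
    rewrite ?in_setX ?aE ?bE ?cE ?group1 ?order_pair ?order1 ?lcmn1 //.
- case/(chain_comp _ _ cycF) => [a [b [c [aE bE cE [dab dbc nab nbc nac]]]]].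
  apply: (@mk_tri _ _ (1%g, a) (1%g, b) (1%g, c));
    rewrite ?in_setX ?aE ?bE ?cE ?group1 ?order_pair ?order1 ?lcm1n //.
- case=> pE pF nEF.
  move/cyclicP: cycE => [g Eg]; move/cyclicP: cycF => [h Fh].
  have gE : g \in E by rewrite Eg cycle_id.
  have hF : h \in F by rewrite Fh cycle_id.
  move: pE pF nEF; rewrite Eg Fh -!orderE => pE pF nEF.
  apply: (@mk_tri _ _ (1%g, 1%g) (g, 1%g) (g, h));
    rewrite ?in_setX ?gE ?hF ?group1 ?order_pair ?order1 ?lcmn1 ?dvd1n ?dvdn_lcml //.
  + by rewrite neq_ltn (prime_gt1 pE).
  + apply: contra nEF => /eqP e.
    by rewrite eq_sym -(dvdn_prime2 pF pE) e dvdn_lcmr.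
  + rewrite neq_ltn; apply/orP; left.
    apply: leq_trans (prime_gt1 pE) (dvdn_leq _ (dvdn_lcml _ _)).
    by rewrite lcmn_gt0 !order_gt0.
Qed.
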